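(* Given an instance of the Squared Metric Facility Location Problem, let $\alpha$ be the vector of final budgets produced by Algorithm $A1$. Then for every facility $i$, cities $j$ and $j'$, and all positive reals $\beta,\gamma,\delta$, $$ \alpha_j \le \Big(1 + \beta + \frac{1}{\gamma}\Big) \alpha_{j'} + \Big(1 + \gamma + \frac{1}{\delta}\Big) c_{ij'} + \Big(1 + \delta + \frac{1}{\beta} \Big) c_{ij}. $$
   Context: Facility Location instance: finite disjoint sets $C$ (cities), $F$ (facilities), non-negative $c_{ij}$, $f_i$. Squared metric: $\sqrt{c_{ij}}\le \sqrt{c_{ij'}}+\sqrt{c_{i'j'}}+\sqrt{c_{i'j}}$ for all $i,i'\in F$, $j,j'\in C$. Algorithm $A1$: initially all facilities are unopened and all cities unconnected ($U:=C$); each city $j$ has a budget $\alpha_j=0$; an unconnected city $j$ offers $\max(\alpha_j-c_{ij},0)$ to each unopened facility $i$. While $U\ne\emptyset$, the budgets of all unconnected cities increase continuously at the same rate (connected cities' budgets stay fixed) until: (a) for some unconnected $j$ and open $i$, $\alpha_j=c_{ij}$: connect $j$ to $i$ and remove $j$ from $U$; or (b) for some unopened $i$, $\sum_{j\in U}\max(\alpha_j-c_{ij},0)=f_i$: open $i$ and connect to $i$ every unconnected $j$ with $\alpha_j\ge c_{ij}$, removing them from $U$. *)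

(* Defs.v *)
From HB Require Import structures.
From mathcomp Require Import all_boot all_order all_algebra.
From mathcomp Require Import reals.
Set Implicit Arguments. Unset Strict Implicit. Unset Printing Implicit Defensive.
Import Order.TTheory GRing.Theory Num.Theory.
Local Open Scope ring_scope.

(** Facility location instance: cities C, facilities F (finite; disjointness
    is automatic as they are distinct types), costs c i j (facility i,
    city j) and opening costs f i. *)

Section A1.
Variables (R : realType) (C F : finType) (c : F -> C -> R) (f : F -> R).

Definition squared_metric : Prop :=
  forall (i i' : F) (j j' : C),
    Num.sqrt (c i j) <= Num.sqrt (c i j') + Num.sqrt (c i' j') + Num.sqrt (c i' j).

(** State of Algorithm A1 at a moment of its execution:
    - [a1_time]  : current time t (= budget of every unconnected city);
    - [a1_open]  : the set of opened facilities;
    - [a1_U]     : the set U of unconnected cities;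
    - [a1_bud]   : the (frozen) budgets of connected cities. *)
Record a1_state := A1State {
  a1_time : R;
  a1_open : {set F};
  a1_U : {set C};
  a1_bud : C -> R }.

Definition a1_alpha (st : a1_state) (s : R) (j : C) : R :=
  if j \in a1_U st then s else a1_bud st j.

Definition a1_offer (st : a1_state) (s : R) (i : F) : R :=
  \sum_(j in a1_U st) Num.max (a1_alpha st s j - c i j) 0.

Definition a1_event_a (st : a1_state) (s : R) : Prop :=
  exists (j : C) (i : F), [/\ j \in a1_U st, i \in a1_open st & a1_alpha st s j = c i j].

Definition a1_event_b (st : a1_state) (s : R) : Prop :=
  exists i : F, i \notin a1_open st /\ a1_offer st s i = f i.

Definition a1_event (st : a1_state) (s : R) : Prop :=
  a1_event_a st s \/ a1_event_b st s.

(** One iteration of the while loop: U is nonempty, the clock advances to the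
    first time s >= t at which an event occurs (no event at any time in [t, s)),
    and one event occurring at time s is processed (ties are resolved
    arbitrarily, one event per step; remaining simultaneous events are
    processed in later steps at the same time s). *)
Definition a1_step (st st' : a1_state) : Prop :=
  exists s : R,
    [/\ a1_U st != set0,
        a1_time st <= s,
        (forall s', a1_time st <= s' -> s' < s -> ~ a1_event st s'),
        a1_time st' = s &
        ((exists (j : C) (i : F),
           [/\ (j \in a1_U st) && (i \in a1_open st), a1_alpha st s j = c i j,
               a1_open st' = a1_open st,
               a1_U st' = a1_U st :\ j &
               a1_bud st' = fun k => if k == j then s else a1_bud st k])
        \/
        (exists i : F,
           [/\ i \notin a1_open st, a1_offer st s i = f i,
               a1_open st' = i |: a1_open st,
               a1_U st' = [set k in a1_U st | a1_alpha st s k < c i k] &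
               a1_bud st' = fun k =>
                 if (k \in a1_U st) && (c i k <= a1_alpha st s k)
                 then a1_alpha st s k else a1_bud st k]))].

Definition a1_init : a1_state := A1State 0 set0 [set: C] (fun _ => 0).

Inductive a1_reach : a1_state -> Prop :=
| a1_reach_init : a1_reach a1_init
| a1_reach_step st st' : a1_reach st -> a1_step st st' -> a1_reach st'.

Definition A1_final_budgets (alpha : C -> R) : Prop :=
  exists st : a1_state,
    [/\ a1_reach st, a1_U st = set0 & forall j, alpha j = a1_alpha st (a1_time st) j].

End A1.

(* Main.v *)
Require Import Defs.
From HB Require Import structures.
From mathcomp Require Import all_boot all_order all_algebra.
From mathcomp Require Import reals.
From mathcomp Require Import ring lra.
Import Order.TTheory GRing.Theory Num.Theory.
Local Open Scope ring_scope.

Section Inv.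
Variables (R : realType) (C F : finType) (c : F -> C -> R) (f : F -> R).

Definition inv (st : a1_state R C F) : Prop :=
  [/\ 0 <= a1_time st,
      (forall j, j \notin a1_U st -> 0 <= a1_bud st j <= a1_time st),
      (forall i j, i \in a1_open st -> j \in a1_U st -> a1_time st <= c i j) &
      (forall j', j' \notin a1_U st -> exists2 i', i' \in a1_open st &
         c i' j' <= a1_bud st j' /\
         forall j, j \notin a1_U st -> a1_bud st j <= a1_bud st j' \/ a1_bud st j <= c i' j)].

Lemma inv_init : inv (a1_init R C F).
Proof.
split=> //=; first by move=> j; rewrite inE.
- by move=> i j; rewrite inE.
- by move=> j; rewrite inE.
Qed.

Lemma inv_step st st' : inv st -> a1_step c f st st' -> inv st'.
Proof.
case=> t0 hB hC hD [s [_ hts hno hts' hev]].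
have key : forall i j, i \in a1_open st -> j \in a1_U st -> s <= c i j.
  move=> i j hi hj; rewrite leNgt; apply/negP => hlt.
  apply: (hno (c i j) (hC _ _ hi hj) hlt); left; exists j, i; split=> //.
  by rewrite /a1_alpha hj.
case: hev => [[j [i [/andP[hj hi] hal hop hU hbud]]] | [i [hi hoff hop hU hbud]]].
- have hs: s = c i j by move: hal; rewrite /a1_alpha hj.
  have ts0 : 0 <= s by apply: le_trans t0 hts.
  split; rewrite ?hts' ?hop ?hU ?hbud //.
  + move=> k; rewrite in_setD1 negb_and negbK => /orP[/eqP->|hk].
      by rewrite eqxx ts0 lexx.
    have -> : (k == j) = false by apply/eqP => e; move: hk; rewrite e hj.
    by case/andP: (hB _ hk) => -> h; rewrite (le_trans h hts).
  + by move=> i0 k hi0; rewrite in_setD1 => /andP[_ hk]; exact: key.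
  + move=> j'; rewrite in_setD1 negb_and negbK => /orP[/eqP->|hj'].
      exists i => //; rewrite eqxx; split; first by rewrite -hs.
      move=> k; rewrite in_setD1 negb_and negbK => /orP[/eqP->|hk].
        by rewrite eqxx; left.
      have -> : (k == j) = false by apply/eqP => e; move: hk; rewrite e hj.
      by left; case/andP: (hB _ hk) => _ h; rewrite (le_trans h hts).
    have -> : (j' == j) = false by apply/eqP => e; move: hj'; rewrite e hj.
    have [i' hi' [hc hall]] := hD _ hj'.
    exists i' => //; split => // k; rewrite in_setD1 negb_and negbK => /orP[/eqP->|hk].
      by rewrite eqxx; right; exact: key.
    have -> : (k == j) = false by apply/eqP => e; move: hk; rewrite e hj.
    exact: hall.
- have ts0 : 0 <= s by apply: le_trans t0 hts.
  have alU k : k \in a1_U st -> a1_alpha st s k = s by rewrite /a1_alpha => ->.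
  have alN k : k \notin a1_U st -> a1_alpha st s k = a1_bud st k
    by rewrite /a1_alpha => /negbTE ->.
  have newb k : k \in a1_U st -> k \notin a1_U st' -> c i k <= s /\ a1_bud st' k = s.
    move=> hk; rewrite hU inE hk /= alU // -leNgt => hle.
    by rewrite hbud hk alU // hle.
  have oldb k : k \notin a1_U st -> a1_bud st' k = a1_bud st k.
    by move=> hk; rewrite hbud (negbTE hk).
  have Usub k : k \in a1_U st' -> k \in a1_U st by rewrite hU inE => /andP[].
  have hB' k : k \notin a1_U st' -> 0 <= a1_bud st' k <= s.
    case: (boolP (k \in a1_U st)) => hk hk'.
      by have [_ ->] := newb _ hk hk'; rewrite ts0 lexx.
    by rewrite oldb //; case/andP: (hB _ hk) => -> h; rewrite (le_trans h hts).
  split; rewrite ?hts' ?hop //.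
  + move=> i0 k; rewrite in_setU1 => /orP[/eqP->|hi0] hk.
      by move: hk; rewrite hU inE => /andP[hk]; rewrite alU // => /ltW.
    exact: key _ _ hi0 (Usub _ hk).
  + move=> j'; case: (boolP (j' \in a1_U st)) => hj hj'.
      have [hc hb] := newb _ hj hj'.
      exists i; first by rewrite in_setU1 eqxx.
      split; first by rewrite hb.
      by move=> k hk; left; rewrite hb; case/andP: (hB' _ hk).
    have [i' hi' [hc hall]] := hD _ hj.
    exists i'; first by rewrite in_setU1 hi' orbT.
    rewrite oldb //; split => // k.
    case: (boolP (k \in a1_U st)) => hk hk'.
      by have [_ ->] := newb _ hk hk'; right; exact: key.
    by rewrite oldb //; exact: hall.
Qed.

Lemma inv_reach st : a1_reach c f st -> inv st.
Proof. elim=> [|st0 st1 _ IH hs]; [exact: inv_init | exact: inv_step IH hs]. Qed.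

End Inv.

Lemma sq_bound (R : realType) (x y z b g d : R) :
  0 <= x -> 0 <= y -> 0 <= z -> 0 < b -> 0 < g -> 0 < d ->
  (x + y + z) ^+ 2 <= (1 + b + g^-1) * x ^+ 2 + (1 + g + d^-1) * y ^+ 2
                      + (1 + d + b^-1) * z ^+ 2.
Proof.
move=> x0 y0 z0 b0 g0 d0.
have bi : b * b^-1 = 1 by rewrite mulfV // gt_eqF.
have gi : g * g^-1 = 1 by rewrite mulfV // gt_eqF.
have di : d * d^-1 = 1 by rewrite mulfV // gt_eqF.
have b1 : 0 <= b^-1 * (b * x - z) ^+ 2 by apply: mulr_ge0; [rewrite invr_ge0 ltW | exact: sqr_ge0].
have g1 : 0 <= g^-1 * (g * y - x) ^+ 2 by apply: mulr_ge0; [rewrite invr_ge0 ltW | exact: sqr_ge0].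
have d1 : 0 <= d^-1 * (d * z - y) ^+ 2 by apply: mulr_ge0; [rewrite invr_ge0 ltW | exact: sqr_ge0].
have e1 : b^-1 * (b * x - z) ^+ 2 = b * x ^+ 2 - 2 * x * z + b^-1 * z ^+ 2.
  rewrite !expr2; set u := b^-1; have : b * u = 1 by []. move=> h.
  transitivity ((b * u) * b * x * x - 2 * (b * u) * x * z + u * z * z); first ring.
  by rewrite h; ring.
have e2 : g^-1 * (g * y - x) ^+ 2 = g * y ^+ 2 - 2 * x * y + g^-1 * x ^+ 2.
  rewrite !expr2; set u := g^-1; have : g * u = 1 by []. move=> h.
  transitivity ((g * u) * g * y * y - 2 * (g * u) * x * y + u * x * x); first ring.
  by rewrite h; ring.
have e3 : d^-1 * (d * z - y) ^+ 2 = d * z ^+ 2 - 2 * y * z + d^-1 * y ^+ 2.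
  rewrite !expr2; set u := d^-1; have : d * u = 1 by []. move=> h.
  transitivity ((d * u) * d * z * z - 2 * (d * u) * y * z + u * y * y); first ring.
  by rewrite h; ring.
rewrite e1 in b1; rewrite e2 in g1; rewrite e3 in d1.
have -> : (x + y + z) ^+ 2 = x^+2 + y^+2 + z^+2 + 2 * x * y + 2 * y * z + 2 * x * z by ring.
lra.
Qed.

Theorem lemma3 (R : realType) (C F : finType) (c : F -> C -> R) (f : F -> R)
  (c_ge0 : forall i j, 0 <= c i j) (f_ge0 : forall i, 0 <= f i)
  (hsq : squared_metric c)
  (alpha : C -> R) (halpha : A1_final_budgets c f alpha) :
  forall (i : F) (j j' : C) (beta gamma delta : R),
    0 < beta -> 0 < gamma -> 0 < delta ->
    alpha j <= (1 + beta + gamma^-1) * alpha j'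
               + (1 + gamma + delta^-1) * c i j'
               + (1 + delta + beta^-1) * c i j.
Proof.
move=> i j j' b g d b0 g0 d0.
case: halpha => st [hr hU hal].
case: (@inv_reach _ _ _ c f _ hr) => _ hB _ hD.
have nU k : k \notin a1_U st by rewrite hU inE.
have aE k : alpha k = a1_bud st k by rewrite hal /a1_alpha (negbTE (nU k)).
have [i' _ [hc hall]] := hD _ (nU j').
have a0 : 0 <= alpha j' by rewrite aE; case/andP: (hB _ (nU j')).
have bi : 0 < b^-1 by rewrite invr_gt0.
have gi : 0 < g^-1 by rewrite invr_gt0.
have di : 0 < d^-1 by rewrite invr_gt0.
have cij := c_ge0 i j; have cij' := c_ge0 i j'.
case: (hall _ (nU j)) => h; rewrite -!aE in h hc.
- have : 0 <= (b + g^-1) * alpha j' by rewrite mulr_ge0 // ltW // addr_gt0.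
  have : 0 <= (1 + g + d^-1) * c i j' by rewrite mulr_ge0 // ltW // !addr_gt0.
  have : 0 <= (1 + d + b^-1) * c i j by rewrite mulr_ge0 // ltW // !addr_gt0.
  nra.
- apply: le_trans h _.
  have hs := hsq i' i j j'.
  have sq0 k l : 0 <= Num.sqrt (c k l) by rewrite sqrtr_ge0.
  have hx : Num.sqrt (c i' j') <= Num.sqrt (alpha j') by rewrite ler_sqrt.
  have : c i' j <= (Num.sqrt (alpha j') + Num.sqrt (c i j') + Num.sqrt (c i j)) ^+ 2.
    have hS : Num.sqrt (c i' j) <= Num.sqrt (alpha j') + Num.sqrt (c i j') + Num.sqrt (c i j).
      by move: hs hx; lra.
    rewrite -{1}(sqr_sqrtr (c_ge0 i' j)) !expr2.
    by apply: ler_pM; rewrite ?sqrtr_ge0.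
  move/le_trans; apply.
  have := @sq_bound R _ _ _ _ _ _ (sqrtr_ge0 (alpha j')) (sqrtr_ge0 (c i j')) (sqrtr_ge0 (c i j)) b0 g0 d0.
  by rewrite !sqr_sqrtr ?c_ge0.
Qed.
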